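(* Let $M$ be a compact metric space and $f:M\to M$ a homeomorphism. Then: (1) for every finite open covering $\mathcal{U}$ of $M$, $[a_{f,\mathcal{U}}(n)]\in\mathbb{B}$; (2) $o(f)\in\overline{\mathbb{B}}$.
   Context: Let $\mathcal{O}$ be the set of non-decreasing sequences $a:\mathbb{N}\to[0,\infty)$, $a\approx b$ iff $c_1a(n)\le b(n)\le c_2a(n)$ for all $n$ for some constants $0<c_1\le c_2$, $\mathbb{O}=\mathcal{O}/\!\approx$ with classes $[a(n)]$, ordered by $[a(n)]\le[b(n)]$ iff $a(n)\le Cb(n)$ for all $n$ for some $C>0$; $\overline{\mathbb{O}}$ is its Dedekind–MacNeille completion. A class $[a(n)]$ has the bounded jump property (BJP) if there is $C>0$ with $a(n+1)\le Ca(n)$ for all $n$ (independent of representative); $\mathbb{B}\subset\mathbb{O}$ is the set of such classes and $\overline{\mathbb{B}}=\{\sup(\Gamma)\in\overline{\mathbb{O}}:\Gamma\subset\mathbb{B}\text{ countable}\}$. For a finite open covering $\mathcal{U}=\{U_1,\dots,U_k\}$ of $M$, let $\mathcal{U}^n=\{U_{i_0}\cap f^{-1}(U_{i_1})\cap\cdots\cap f^{-n}(U_{i_n})\neq\emptyset: i_0,\dots,i_n\in\{1,\dots,k\}\}$ and let $a_{f,\mathcal{U}}(n)$ be the minimal cardinality of a subcovering of $\mathcal{U}^n$. The generalized entropy is $o(f)=\sup\{[g_{f,\varepsilon}(n)]:\varepsilon>0\}\in\overline{\mathbb{O}}$, where $g_{f,\varepsilon}(n)$ is the minimal cardinality of a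 finite set $G$ such that $M=\bigcup_{x\in G}\{y:\max_{0\le k\le n-1}d(f^kx,f^ky)<\varepsilon\}$; equivalently $o(f)=\sup\{[a_{f,\mathcal{U}}(n)]:\mathcal{U}\text{ a finite open covering}\}$. *)

(* Defs.v *)
From HB Require Import structures.
From mathcomp Require Import all_boot all_order all_algebra.
From mathcomp Require Import all_classical all_reals all_analysis.

Set Implicit Arguments.
Unset Strict Implicit.
Unset Printing Implicit Defensive.

Import Order.TTheory GRing.Theory Num.Theory.

Local Open Scope classical_set_scope.
Local Open Scope ring_scope.

Lemma exP_asbool (P : nat -> Prop) : (exists n, P n) -> exists n, `[< P n >].
Proof. by case=> n Pn; exists n; apply/asboolP. Qed.

(* the least n with P n (0 if there is none; never used in that case) *)
Definition least_nat (P : nat -> Prop) : nat :=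
  match pselect (exists n, P n) with
  | left h => ex_minn (exP_asbool h)
  | right _ => 0%N
  end.

Section GrowthTypes.
Variable R : realType.

Definition in_calO (a : nat -> R) : Prop :=
  (forall n, 0 <= a n) /\ (forall n, a n <= a n.+1).

Definition leO (a b : nat -> R) : Prop :=
  exists2 C : R, 0 < C & forall n, a n <= C * b n.

Definition BJP (a : nat -> R) : Prop :=
  in_calO a /\ exists2 C : R, 0 < C & forall n, a n.+1 <= C * a n.

Definition upperO (S : set (nat -> R)) : set (nat -> R) :=
  [set b | in_calO b /\ forall a, S a -> leO a b].
Definition lowerO (T : set (nat -> R)) : set (nat -> R) :=
  [set a | in_calO a /\ forall b, T b -> leO a b].

(* Elements of the Dedekind-MacNeille completion of O are the cuts
   A = lowerO (upperO A); the supremum in it of a subset S of O is the cut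
   lowerO (upperO S). *)
Definition supDM (S : set (nat -> R)) : set (nat -> R) := lowerO (upperO S).

Definition in_Bbar (x : set (nat -> R)) : Prop :=
  exists Gamma : set (nat -> R),
    [/\ countable Gamma, Gamma `<=` BJP & supDM Gamma = x].

End GrowthTypes.

Section Dynamics.
Variables (R : realType) (M : metricType R).

Definition homeomorphism (f : M -> M) : Prop :=
  continuous f /\ exists g : M -> M, [/\ continuous g, cancel f g & cancel g f].

Definition itin_set (f : M -> M) (k : nat) (U : 'I_k -> set M) (n : nat)
    (t : {ffun 'I_n.+1 -> 'I_k}) : set M :=
  [set x | forall j : 'I_n.+1, U (t j) (iter j f x)].

(* a_{f,U}(n) : minimal cardinality of a subcovering of U^n
   (members of U^n indexed by the words t with nonempty itin_set) *)
Definition a_cov (f : M -> M) (k : nat) (U : 'I_k -> set M) (n : nat) : nat :=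
  least_nat (fun m => exists S : {set {ffun 'I_n.+1 -> 'I_k}},
    [/\ (forall t, t \in S -> itin_set f U t !=set0),
        (forall x, exists2 t, t \in S & itin_set f U t x)
      & #|S| = m]).

Definition bowen_ball (f : M -> M) (eps : R) (n : nat) (x : M) : set M :=
  [set y | forall j : nat, (j < n)%N -> mdist (iter j f x) (iter j f y) < eps].

Definition g_span (f : M -> M) (eps : R) (n : nat) : nat :=
  least_nat (fun m => exists G : seq M,
    [/\ uniq G, (forall y, exists2 x, x \in G & bowen_ball f eps n x y)
      & size G = m]).

Definition o_ent (f : M -> M) : set (nat -> R) :=
  supDM [set b | exists2 eps : R, 0 < eps & b = (fun n => (g_span f eps n)%:R)].

End Dynamics.

(* Main.v *)
Require Import Defs.
From HB Require Import structures.
From mathcomp Require Import all_boot all_order all_algebra.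
From mathcomp Require Import all_classical all_reals all_analysis.
From mathcomp Require Import lra.
Set Implicit Arguments.
Unset Strict Implicit.
Unset Printing Implicit Defensive.
Import Order.TTheory GRing.Theory Num.Theory.
Local Open Scope classical_set_scope.
Local Open Scope ring_scope.

Lemma least_natP (P : nat -> Prop) : (exists n, P n) ->
  P (least_nat P) /\ forall n, P n -> (least_nat P <= n)%N.
Proof.
move=> h; rewrite /least_nat; case: pselect => // h'.
case: ex_minnP => m /asboolP Pm mn; split => // n Pn; apply: mn; exact/asboolP.
Qed.

Section Cov.
Variables (R : realType) (M : metricType R) (f : M -> M).
Variables (k : nat) (U : 'I_k -> set M).
Hypothesis hU : forall x : M, exists i, U i x.

Definition Pa n m := exists S : {set {ffun 'I_n.+1 -> 'I_k}},
    [/\ (forall t, t \in S -> itin_set f U t !=set0),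
        (forall x, exists2 t, t \in S & itin_set f U t x)
      & #|S| = m].

Lemma gi_ex : exists gi : M -> 'I_k, forall x, U (gi x) x.
Proof. by have [gi hgi] := choice hU; exists gi. Qed.

Lemma Pa_ex n : exists m, Pa n m.
Proof.
have [gi hgi] := gi_ex.
exists #|[set t : {ffun 'I_n.+1 -> 'I_k} | `[< itin_set f U t !=set0 >]]%SET|.
eexists; split; last reflexivity.
- by move=> t; rewrite inE => /asboolP.
- move=> x; exists [ffun j : 'I_n.+1 => gi (iter j f x)]; last first.
    by move=> j; rewrite ffunE.
  rewrite inE; apply/asboolP; exists x => j; by rewrite ffunE.
Qed.

Lemma a_covP n : Pa n (a_cov f U n) /\ forall m, Pa n m -> (a_cov f U n <= m)%N.
Proof. exact: (least_natP (Pa_ex n)). Qed.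

Lemma a_cov_le n (S : {set {ffun 'I_n.+1 -> 'I_k}}) :
  (forall t, t \in S -> itin_set f U t !=set0) ->
  (forall x, exists2 t, t \in S & itin_set f U t x) -> (a_cov f U n <= #|S|)%N.
Proof. move=> h1 h2; apply: (a_covP n).2; by exists S. Qed.

Lemma a_cov_mono n : (a_cov f U n <= a_cov f U n.+1)%N.
Proof.
have [[S [S1 S2 S3]] _] := a_covP n.+1.
pose tr (t : {ffun 'I_n.+2 -> 'I_k}) : {ffun 'I_n.+1 -> 'I_k} :=
  [ffun j => t (widen_ord (leqnSn _) j)].
have sub t x : itin_set f U t x -> itin_set f U (tr t) x.
  by move=> h j; rewrite ffunE; exact: (h (widen_ord (leqnSn _) j)).
apply: leq_trans (a_cov_le (S := tr @: S) _ _) _.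
- move=> t /imsetP[t' t'S ->]; have [x hx] := S1 _ t'S; exists x; exact: sub.
- move=> x; have [t tS hx] := S2 x; exists (tr t); first exact: imset_f.
  exact: sub.
- by rewrite -S3 leq_imset_card.
Qed.

Lemma a_cov_jump n : (a_cov f U n.+1 <= a_cov f U n * k)%N.
Proof.
have [[S [S1 S2 S3]] _] := a_covP n.
have [gi hgi] := gi_ex.
pose ext (p : {ffun 'I_n.+1 -> 'I_k} * 'I_k) : {ffun 'I_n.+2 -> 'I_k} :=
  [ffun j : 'I_n.+2 => if (j < n.+1)%N then p.1 (inord j) else p.2].
pose Q := [set p | (p.1 \in S) && `[< itin_set f U (ext p) !=set0 >]]%SET.
apply: leq_trans (a_cov_le (S := ext @: Q) _ _) _.
- by move=> t /imsetP[p]; rewrite inE => /andP[_ /asboolP h] ->.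
- move=> x; have [t tS hx] := S2 x.
  have hx' : itin_set f U (ext (t, gi (iter n.+1 f x))) x.
    move=> j; rewrite ffunE /=; case: ifP => jn.
      by have := hx (inord j); rewrite inordK.
    have -> : (j : nat) = n.+1.
      by apply/eqP; rewrite eqn_leq -ltnS ltn_ord leqNgt jn.
    exact: hgi.
  exists (ext (t, gi (iter n.+1 f x))) => //.
  apply: imset_f; rewrite inE; apply/andP; split; first exact: tS.
  by apply/asboolP; exists x.
- apply: leq_trans (leq_imset_card _ _) _.
  rewrite -S3 -[k in (_ * k)%N]card_ord -cardsT -cardsX.
  apply: subset_leq_card; apply/fintype.subsetP => p; rewrite !inE => /andP[-> _].
  done.
Qed.
Lemma a_cov0 : (a_cov f U 0 <= k)%N.
Proof.
have [gi hgi] := gi_ex.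
apply: leq_trans (a_cov_le (S := [set t : {ffun 'I_1 -> 'I_k} | `[< itin_set f U t !=set0 >]]%SET) _ _) _.
- by move=> t; rewrite inE => /asboolP.
- move=> x; exists [ffun j : 'I_1 => gi (iter j f x)]; last first.
    by move=> j; rewrite ffunE.
  rewrite inE; apply/asboolP; exists x => j; by rewrite ffunE.
- by apply: leq_trans (max_card _) _; rewrite card_ffun !card_ord expn1.
Qed.

Lemma a_cov_empty n : (forall x : M, False) -> a_cov f U n = 0%N.
Proof.
move=> M0; apply/eqP; rewrite -leqn0.
apply: leq_trans (a_cov_le (S := finset.set0) _ _) _.
- by move=> t; rewrite finset.in_set0.
- by move=> x; case: (M0 x).
- by rewrite finset.cards0.
Qed.

Lemma BJP_a : BJP (fun n => (a_cov f U n)%:R : R).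
Proof.
split.
  split => n; first exact: ler0n.
  rewrite ler_nat; exact: a_cov_mono.
exists (k.+1)%:R => // n.
rewrite -natrM ler_nat; apply: leq_trans (a_cov_jump n) _.
by rewrite mulnC; apply: leq_mul.
Qed.

End Cov.

Lemma leO_trans (R : realType) (a b c : nat -> R) : leO a b -> leO b c -> leO a c.
Proof.
move=> [C1 C1p h1] [C2 C2p h2]; exists (C1 * C2); first exact: mulr_gt0.
move=> n; apply: le_trans (h1 n) _; rewrite -mulrA ler_wpM2l //; exact: ltW.
Qed.


Section Dyn.
Variables (R : realType) (M : metricType R) (f : M -> M).

Section PM.
Variable (x0 : M).
Definition PM (y : M) : Type := M.
HB.instance Definition _ := Topological.copy (PM x0) M.
HB.instance Definition _ := isPointed.Build (PM x0) x0.
Lemma cc : compact [set: M] -> cover_compact [set: PM x0].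
Proof. move=> hc. have : compact [set: PM x0] := hc. by rewrite compact_cover. Qed.
End PM.

Lemma cover_exists : compact [set: M] -> forall r : R, 0 < r ->
  exists k (z : 'I_k -> M), forall x, exists i, mdist (z i) x < r.
Proof.
move=> hc r r0.
have [[x0 _]|M0] := pselect (exists x : M, True); last first.
  exists 0%N, (fun i : 'I_0 => False_rect M (ltac:(by case: i))) => x; case: M0; by exists x.
have := @cc x0 hc => /(_ M setT (fun x => (@interior M (ball x r)) : set (PM x0))).
case.
- by move=> x _; exact: (@open_interior M).
- move=> x _; exists x => //; have [_ h] := open_nbhs_ball x (PosNum r0); exact: h.
move=> D' _ hD.
pose s : seq M := finmap.enum_fset D'.
exists (size s), (fun i => tnth (in_tuple s) i) => x.
have [y yD hy] := hD x I.
have ys : y \in s by [].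
have ii : (index y s < size s)%N by rewrite index_mem.
exists (Ordinal ii : 'I_(size s)).
rewrite (tnth_nth y) /= nth_index //.
by have := interior_subset hy; rewrite ballEmdist.
Qed.

Section Spans.
Variables (k : nat) (z : 'I_k -> M) (r : R).
Hypothesis hz : forall x, exists i, mdist (z i) x < r.
Let U := fun i => [set y | mdist (z i) y < r].

Lemma span_from_cover eps n : r + r <= eps ->
  exists G : seq M, [/\ uniq G, (forall y, exists2 x, x \in G & bowen_ball f eps n x y)
      & (size G <= a_cov f U n)%N].
Proof.
move=> reps.
have hU : forall x, exists i, U i x by exact: hz.
have [[x0 _]|M0] := pselect (exists x : M, True); last first.
  exists [::]; split => // y; case: M0; by exists y.
have [[S [S1 S2 S3]] _] := a_covP f hU n.
have hch : forall t : {ffun 'I_n.+1 -> 'I_k}, exists x, t \in S -> itin_set f U t x.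
  move=> t; case: (boolP (t \in S)) => tS.
    by have [x hx] := S1 t tS; exists x.
  by exists x0.
have [pt hpt] := choice hch.
exists (undup [seq pt t | t <- enum S]); split.
- exact: undup_uniq.
- move=> y; have [t tS hy] := S2 y; exists (pt t).
    by rewrite mem_undup; apply: map_f; rewrite mem_enum.
  move=> j jn; have jn' : (j < n.+1)%N by exact: ltnW.
  have h1 := hpt t tS (Ordinal jn'); have h2 := hy (Ordinal jn').
  rewrite /U /= in h1 h2.
  apply: le_lt_trans (metric_triangle _ (z (t (Ordinal jn'))) _) _.
  rewrite metric_sym; apply: lt_le_trans reps; exact: ltrD.
- by rewrite -S3 cardE; apply: leq_trans (size_undup _) _; rewrite size_map.
Qed.

End Spans.

Lemma g_span_ex : compact [set: M] -> forall eps : R, 0 < eps -> forall n,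
  exists m, exists G : seq M,
    [/\ uniq G, (forall y, exists2 x, x \in G & bowen_ball f eps n x y)
      & size G = m].
Proof.
move=> hc eps e0 n.
have [k [z hz]] := cover_exists hc (divr_gt0 e0 (ltr0Sn _ 1)).
have [G [G1 G2 _]] := span_from_cover hz (eps:=eps) n (ltac:(lra)).
by exists (size G), G.
Qed.

Lemma g_spanP eps n : (exists m, exists G : seq M,
    [/\ uniq G, (forall y, exists2 x, x \in G & bowen_ball f eps n x y)
      & size G = m]) ->
  exists G : seq M, [/\ uniq G, (forall y, exists2 x, x \in G & bowen_ball f eps n x y)
      & size G = g_span f eps n].
Proof. by move=> h; have [] := least_natP h. Qed.

Lemma g_span_le eps n (G : seq M) : uniq G ->
  (forall y, exists2 x, x \in G & bowen_ball f eps n x y) -> (g_span f eps n <= size G)%N.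
Proof.
move=> h1 h2; have h : exists m, exists G : seq M,
    [/\ uniq G, (forall y, exists2 x, x \in G & bowen_ball f eps n x y) & size G = m].
  by exists (size G), G.
by have [_ ->] := least_natP h; last by exists G.
Qed.

Section Lebesgue.
Variables (k : nat) (z : 'I_k -> M) (rho : R).
Hypothesis rho0 : 0 < rho.
Hypothesis hz : forall x, exists i, mdist (z i) x < rho.
Let U2 := fun i => [set y | mdist (z i) y < rho + rho].

Lemma hU2 : forall x, exists i, U2 i x.
Proof. move=> x; have [i hi] := hz x; exists i; rewrite /U2 /=; apply: lt_trans hi _; by rewrite ltrDl. Qed.

Lemma cover_from_span n (G : seq M) :
  (forall y, exists2 x, x \in G & bowen_ball f rho n.+1 x y) ->
  (a_cov f U2 n <= size G)%N.
Proof.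
move=> hG.
have [zi hzi] := choice hz.
pose w (x : M) : {ffun 'I_n.+1 -> 'I_k} := [ffun j : 'I_n.+1 => zi (iter j f x)].
apply: leq_trans (a_cov_le (f:=f) hU2 (S := [set t in map w G]%SET) _ _) _.
- move=> t; rewrite inE => /mapP[x xG ->]; exists x => j; rewrite ffunE /U2 /=.
  apply: lt_trans (hzi _) _; by rewrite ltrDl.
- move=> y; have [x xG hb] := hG y; exists (w x).
    by rewrite inE; apply: map_f.
  move=> j; rewrite ffunE /U2 /=.
  apply: le_lt_trans (metric_triangle _ (iter j f x) _) _.
  apply: ltrD; first exact: hzi.
  exact: hb j (ltn_ord j).
- by rewrite cardsE; apply: leq_trans (card_size _) _; rewrite size_map.
Qed.

Hypothesis hc : compact [set: M].

Lemma a_le_kg n : (a_cov f U2 n <= k * g_span f rho n)%N.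
Proof.
case: n => [|n].
  have [[x0 _]|M0] := pselect (exists x : M, True); last first.
    by rewrite (a_cov_empty f hU2) // => x; apply: M0; exists x.
  have [G [G1 G2 G3]] := g_spanP (g_span_ex hc rho0 0).
  have g1 : (0 < g_span f rho 0)%N.
    rewrite -G3; have [x xG _] := G2 x0; by case: G xG {G1 G2 G3}.
  apply: leq_trans (a_cov0 f hU2) _.
  by rewrite -{1}(muln1 k) leq_mul2l g1 orbT.
apply: leq_trans (a_cov_jump f hU2 n) _.
rewrite mulnC leq_mul2l; apply/orP; right.
have [G [G1 G2 G3]] := g_spanP (g_span_ex hc rho0 n.+1).
by rewrite -G3; apply: cover_from_span.
Qed.

End Lebesgue.

Lemma part2 : compact [set: M] -> in_Bbar (o_ent f).
Proof.
move=> hc.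
pose rho (m : nat) : R := (m.+1%:R)^-1.
have rho0 m : 0 < rho m by rewrite invr_gt0 ltr0Sn.
have hch : forall m, exists p : {k : nat & 'I_k -> M},
    forall x, exists i, mdist (projT2 p i) x < rho m.
  move=> m; have [k [z hz]] := cover_exists hc (rho0 m); by exists (existT _ k z).
have [zz hzz] := choice hch.
pose U2 m := fun i : 'I_(projT1 (zz m)) =>
  [set y | mdist (projT2 (zz m) i) y < rho m + rho m].
have hU2 m : forall x, exists i, U2 m i x.
  move=> x; have [i hi] := hzz m x; exists i; rewrite /U2 /=.
  by apply: lt_trans hi _; rewrite ltrDl.
pose aseq m := fun n => (a_cov f (U2 m) n)%:R : R.
exists (range aseq); split.
- exact: card_le_trans (card_image_le _ _) (countableP _).
- move=> _ [m _ <-]; exact: BJP_a (hU2 m).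
rewrite /o_ent /supDM; congr lowerO; apply/seteqP; split => b [cb hb]; split => //.
- move=> _ [eps e0 ->].
  have e4 : 0 < eps / 4 by rewrite divr_gt0.
  have [m] := ltr_add_invr e4; rewrite add0r => hm.
  have hrm : rho m < eps / 4 by [].
  apply: leO_trans (hb (aseq m) _); last by exists m.
  exists 1 => // n; rewrite mul1r /aseq ler_nat.
  have hz2 : forall x, exists i, mdist (projT2 (zz m) i) x < rho m + rho m.
    exact: hU2.
  have [G [G1 G2 G3]] := span_from_cover hz2 (eps:=eps) n ltac:(lra).
  exact: leq_trans (g_span_le G1 G2) G3.
- move=> _ [m _ <-].
  apply: leO_trans (hb _ _); last by exists (rho m).
  exists (projT1 (zz m)).+1%:R => // n.
  rewrite /aseq -natrM ler_nat.
  apply: leq_trans (a_le_kg (rho0 m) (hzz m) hc n) _.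
  by apply: leq_mul.
Qed.

End Dyn.

Unset Implicit Arguments.
Set Strict Implicit.

Theorem proposition2p4 (R : realType) (M : metricType R) (f : M -> M) :
  compact [set: M] -> homeomorphism f ->
  (forall (k : nat) (U : 'I_k -> set M),
      (forall i, open (U i)) -> (forall x : M, exists i, U i x) ->
      BJP (fun n => (a_cov f U n)%:R : R))
  /\ in_Bbar (o_ent f).
Proof.
move=> hc _; split.
- by move=> k U _ hU; apply: BJP_a.
- exact: part2.
Qed.
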